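(* Let $A,A^*:V\to V$ be diagonalizable linear maps, each with exactly $d+1$ distinct eigenvalues, let $E_0,\dots,E_d$ be an ordering of the primitive idempotents of $A$ and $E^*_0,\dots,E^*_d$ an ordering of those of $A^*$, with $\theta_i$ (resp. $\theta^*_i$) the eigenvalue of $A$ (resp. $A^*$) for $E_i$ (resp. $E^*_i$), and assume $\dim E^*_0V=1$. Let $\{\zeta_i\}_{i=0}^d$ be the split sequence. Then $$\zeta_d=\eta^*_d(\theta^*_0)\,\tau_d(\theta_d)\,\mathrm{tr}(E_dE^*_0),\qquad \sum_{i=0}^d\eta_{d-i}(\theta_0)\eta^*_{d-i}(\theta^*_0)\zeta_i=\eta^*_d(\theta^*_0)\,\eta_d(\theta_0)\,\mathrm{tr}(E_0E^*_0).$$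
   Context: $V$ is a nonzero finite-dimensional vector space over an algebraically closed field $\mathcal K$. The primitive idempotent of a diagonalizable $X$ for eigenvalue $\lambda_i$ is $\prod_{j\ne i}\frac{X-\lambda_jI}{\lambda_i-\lambda_j}$. Polynomials: $\eta_i(x)=\prod_{j=0}^{i-1}(x-\theta_{d-j})$, $\eta^*_i(x)=\prod_{j=0}^{i-1}(x-\theta^*_{d-j})$, $\tau_i(x)=\prod_{j=0}^{i-1}(x-\theta_j)$ for $0\le i\le d$ (empty products equal $1$). Since $\dim E^*_0V=1$, the map $E^*_0\tau_i(A)$ acts on $E^*_0V$ as a scalar $\chi_i$; the split sequence is $\zeta_i=(\theta^*_0-\theta^*_1)\cdots(\theta^*_0-\theta^*_i)\chi_i$ for $0\le i\le d$. *)

(* Defs.v *)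
From HB Require Import structures.
From mathcomp Require Import all_boot all_order all_algebra.
Set Implicit Arguments. Unset Strict Implicit. Unset Printing Implicit Defensive.
Import Order.TTheory GRing.Theory Num.Theory.
Local Open Scope ring_scope.

(* V = 'cV[K]_n (column vectors; a matrix M acts as v |-> M *m v). *)

Definition prim_idem (K : fieldType) (n d : nat) (X : 'M[K]_n)
  (th : 'I_d.+1 -> K) (i : 'I_d.+1) : 'M[K]_n :=
  \prod_(j < d.+1 | j != i) ((th i - th j)^-1 *: (X - (th j)%:M)).

Definition eta_pol (K : fieldType) (d : nat) (th : 'I_d.+1 -> K) (i : nat) (x : K) : K :=
  \prod_(j < i) (x - th (inord (d - j))).

Definition tau_pol (K : fieldType) (d : nat) (th : 'I_d.+1 -> K) (i : nat) (x : K) : K :=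
  \prod_(j < i) (x - th (inord j)).

Definition tau_mx (K : fieldType) (n d : nat) (th : 'I_d.+1 -> K) (i : nat)
  (X : 'M[K]_n) : 'M[K]_n :=
  \prod_(j < i) (X - (th (inord j))%:M).

Definition eigen_list (K : fieldType) (n d : nat) (X : 'M[K]_n) (th : 'I_d.+1 -> K) :=
  injective th /\ (forall i, eigenvalue X (th i)) /\
  (forall a, eigenvalue X a -> exists i, a = th i).

Definition split_seq (K : fieldType) (d : nat) (ths : 'I_d.+1 -> K) (chi : nat -> K)
  (i : nat) : K :=
  (\prod_(1 <= k < i.+1) (ths ord0 - ths (inord k))) * chi i.

(* Main.v *)
Require Import Defs.
From HB Require Import structures.
From mathcomp Require Import all_boot all_order all_algebra.
From mathcomp Require Import zify ring.
Set Implicit Arguments. Unset Strict Implicit. Unset Printing Implicit Defensive.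
Import Order.TTheory GRing.Theory Num.Theory.
Local Open Scope ring_scope.

Lemma rank1_scalar (K : fieldType) (n : nat) (E X : 'M[K]_n.+1) (c : K) :
  \rank E = 1%N ->
  (forall w : 'cV[K]_n.+1, (E *m X) *m (E *m w) = c *: (E *m w)) ->
  c = \tr (E *m X).
Proof.
move=> rkE H.
have Enz : E != 0 by rewrite -mxrank_eq0 rkE.
have := mulmx_base E; move: (col_base E) (row_base E); rewrite rkE => C R defE.
set s := (R *m X *m C) 0 0.
have hs : R *m X *m C = s%:M.
  by apply/matrixP => i j; rewrite !ord1 [RHS]mxE eqxx mulr1n.
have Hw : forall w : 'cV[K]_n.+1, (E *m X) *m (E *m w) = s *: (E *m w).
  move=> w; rewrite -defE !mulmxA -[C *m R *m X]mulmxA -[C *m (R *m X) *m C]mulmxA hs.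
  by rewrite mul_mx_scalar -!scalemxAl.
have trs : \tr (E *m X) = s.
  by rewrite -defE -mulmxA mxtrace_mulC hs mxtrace_scalar.
rewrite trs; apply/eqP; rewrite -subr_eq0; apply/negPn/negP => ne.
move/eqP: Enz; apply; apply/matrixP => i j; rewrite mxE.
have := H (delta_mx j 0); rewrite Hw => /eqP; rewrite eq_sym -subr_eq0 -scalerBl.
rewrite scaler_eq0 (negbTE ne) /= -colE => /eqP/matrixP/(_ i 0).
by rewrite !mxE.
Qed.

Lemma comm_lin (K : fieldType) n (A : 'M[K]_n.+1) (a b : K) :
  GRing.comm (A - a%:M) (A - b%:M).
Proof.
rewrite /GRing.comm !mulrBl !mulrBr -!mulmxE !mul_mx_scalar !mul_scalar_mx !scale_scalar_mx mulrC !opprB !addrA.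
rewrite [LHS]addrAC [RHS]addrAC; congr (_ + _); exact: addrAC.
Qed.


Lemma key_id (K : fieldType) n (A : 'M[K]_n.+1) (t : nat -> K) m :
  \sum_(i < m.+1) (\prod_(i.+1 <= k < m.+1) (t 0%N - t k)) *: \prod_(j < i) (A - (t j)%:M)
  = \prod_(1 <= k < m.+1) (A - (t k)%:M).
Proof.
elim: m => [|m IH].
  by rewrite big_ord1 !big_geq // big_ord0 scale1r.
rewrite big_ord_recr /= big_geq // scale1r.
rewrite (eq_bigr (fun i : 'I_m.+1 => (t 0%N - t m.+1) *:
   ((\prod_(i.+1 <= k < m.+1) (t 0%N - t k)) *: \prod_(j < i) (A - (t j)%:M)))); last first.
  by move=> i _; rewrite big_nat_recr //= scalerA mulrC.
rewrite -scaler_sumr IH big_ord_recl /= big_add1 /= big_mkord.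
rewrite [in RHS]big_nat_recr //= big_add1 /= big_mkord.
under [X in _ + _ * X]eq_bigr do rewrite /bump leq0n add1n.
have cm : GRing.comm (A - (t 0%N)%:M) (\prod_(i < m) (A - (t i.+1)%:M)).
  by apply: commr_prod => i _; apply: comm_lin.
rewrite cm -mul_mx_scalar mulmxE -mulrDr; congr (_ * _).
by rewrite (raddfB (@scalar_mx _ _)) addrC addrA subrK.
Qed.

Lemma prim_idem_scale (K : fieldType) n d (X : 'M[K]_n.+1) (th : 'I_d.+1 -> K) i :
  prim_idem X th i = (\prod_(j < d.+1 | j != i) (th i - th j))^-1 *:
                      \prod_(j < d.+1 | j != i) (X - (th j)%:M).
Proof. by rewrite /prim_idem scaler_prod prodfV. Qed.

Lemma drop_max (R : nzRingType) d (F : 'I_d.+1 -> R) :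
  \prod_(j < d.+1 | j != ord_max) F j = \prod_(j < d) F (inord j).
Proof.
rewrite big_mkcond big_ord_recr /= eqxx mulr1; apply: eq_bigr => j _.
have -> : widen_ord (leqnSn d) j = inord j by apply: val_inj; rewrite /= inordK // ltnW // ltnS.
rewrite ifT //; apply/eqP => /(congr1 val) /=; rewrite inordK; last by rewrite ltnS ltnW.
by move=> e; move: (ltn_ord j); rewrite e ltnn.
Qed.

Lemma drop_0 (R : nzRingType) d (F : 'I_d.+1 -> R) :
  \prod_(j < d.+1 | j != ord0) F j = \prod_(1 <= k < d.+1) F (inord k).
Proof.
rewrite big_mkcond big_ord_recl /= mul1r big_add1 /= big_mkord; apply: eq_bigr => j _.
have -> : lift ord0 j = inord j.+1 by apply: val_inj; rewrite /= inordK // ltnS.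
by [].
Qed.

Lemma eta_re (K : fieldType) d (th : 'I_d.+1 -> K) x i : (i <= d)%N ->
  eta_pol th (d - i) x = \prod_(i.+1 <= k < d.+1) (x - th (inord k)).
Proof.
move=> le_id.
rewrite /eta_pol -(big_mkord xpredT (fun j => x - th (inord (d - j)))) big_nat_rev /=.
rewrite -{1}(add0n i.+1) big_addn subSS.
apply: eq_big_nat => j /andP [_ lt_j]; congr (x - th (inord _)).
rewrite add0n; lia.
Qed.

Theorem lemma3p8 (K : closedFieldType) (n d : nat) (A As : 'M[K]_n.+1)
  (th ths : 'I_d.+1 -> K) (chi : nat -> K) :
  diagonalizable A -> diagonalizable As ->
  eigen_list A th -> eigen_list As ths ->
  \rank (prim_idem As ths ord0) = 1%N ->
  (* chi_i: the scalar by which E*_0 tau_i(A) acts on E*_0 V *)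
  (forall i : nat, (i <= d)%N -> forall w : 'cV[K]_n.+1,
     (prim_idem As ths ord0 *m tau_mx th i A) *m (prim_idem As ths ord0 *m w)
       = chi i *: (prim_idem As ths ord0 *m w)) ->
  split_seq ths chi d
    = eta_pol ths d (ths ord0) * tau_pol th d (th ord_max)
      * \tr (prim_idem A th ord_max *m prim_idem As ths ord0)
  /\ \sum_(i < d.+1) eta_pol th (d - i)%N (th ord0) * eta_pol ths (d - i)%N (ths ord0)
                     * split_seq ths chi i
    = eta_pol ths d (ths ord0) * eta_pol th d (th ord0)
      * \tr (prim_idem A th ord0 *m prim_idem As ths ord0).
Proof.
move=> _ _ [injth _] [injths _] rkE Hchi.
set E := prim_idem As ths ord0.
have chiE : forall i, (i <= d)%N -> chi i = \tr (E *m tau_mx th i A).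
  by move=> i le; apply: rank1_scalar rkE _ => w; exact: Hchi.
have eta0 : forall (th : 'I_d.+1 -> K) x,
    eta_pol th d x = \prod_(1 <= k < d.+1) (x - th (inord k)).
  by move=> th' x; have := eta_re th' x (leq0n d); rewrite subn0.
have eta_s : forall i, (i <= d)%N ->
    eta_pol ths (d - i) (ths ord0) * \prod_(1 <= k < i.+1) (ths ord0 - ths (inord k))
    = eta_pol ths d (ths ord0).
  by move=> i le; rewrite eta_re // eta0 mulrC -big_cat_nat.
split.
  rewrite /split_seq eta0 chiE // -mulrA; congr (_ * _).
  rewrite prim_idem_scale !drop_max.
  change (\prod_(j < d) (A - (th (inord j))%:M)) with (tau_mx th d A).
  change (\prod_(j < d) (th ord_max - th (inord j))) with (tau_pol th d (th ord_max)).
  have tpnz : tau_pol th d (th ord_max) != 0.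
    rewrite /tau_pol prodf_seq_neq0; apply/allP => j _ /=; rewrite subr_eq0.
    apply/eqP => /injth /(congr1 val) /=; rewrite inordK => [e|]; last by rewrite ltnS ltnW.
    by move: (ltn_ord j); rewrite -e ltnn.
  rewrite -scalemxAl mxtraceZ mulrA (mulfV tpnz) mul1r; exact: mxtrace_mulC.
rewrite (eq_bigr (fun i : 'I_d.+1 => eta_pol ths d (ths ord0) *
    (eta_pol th (d - i) (th ord0) * \tr (E *m tau_mx th i A)))); last first.
  move=> i _; have le : (i <= d)%N by rewrite -ltnS.
  by rewrite /split_seq -(chiE i le) -(eta_s i le); ring.
rewrite -mulr_sumr -mulrA; congr (_ * _).
have t0 : th ord0 = th (inord 0) by congr th; apply: val_inj; rewrite /= inordK.
under eq_bigr => i _ do rewrite -mxtraceZ scalemxAr.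
rewrite -raddf_sum -mulmx_sumr /=.
rewrite (eq_bigr (fun i : 'I_d.+1 => (\prod_(i.+1 <= k < d.+1)
   (th (inord 0) - th (inord k))) *: \prod_(j < i) (A - (th (inord j))%:M))); last first.
  by move=> i _; rewrite eta_re -?t0 // -ltnS.
rewrite (key_id A (fun k => th (inord k)) d).
rewrite prim_idem_scale !drop_0 eta0.
have enz : \prod_(1 <= k < d.+1) (th ord0 - th (inord k)) != 0.
  rewrite prodf_seq_neq0; apply/allP => k; rewrite mem_index_iota => /andP [k1 kd] /=.
  rewrite subr_eq0; apply/eqP => /injth /(congr1 val) /=; rewrite inordK // => e.
  by rewrite -e in k1.
rewrite -scalemxAl mxtraceZ mulrA (mulfV enz) mul1r; exact: mxtrace_mulC.
Qed.
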